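(* Let $(X,d,\preccurlyeq)$ be a preordered $s$-regular $b$-metric space and let $T,S,\tilde T,\tilde S:X\to X$. Suppose there are mappings $H_t,K_t:X\to X$, $0\le t\le n$, such that $$T=H_0\preccurlyeq H_1\succcurlyeq H_2\preccurlyeq\cdots\succcurlyeq H_n=\tilde T,\qquad S=K_0\succcurlyeq K_1\preccurlyeq K_2\succcurlyeq\cdots\preccurlyeq K_n=\tilde S.$$ Suppose $x_0\in\mathrm{Coin}(T,S)$ and: (i) for each odd $t$, $1\le t\le n$: $K_t$ is isotone, $H_t$ covers $K_t$, and every chain $C\in\mathcal{C}(x_0,K_t,H_t,\preccurlyeq)$ has a lower bound $w\in X$ satisfying $w\preccurlyeq K_t(w)$ for which there exists $z\in X$ with $H_t^i(z)\preccurlyeq H_t(w)\preccurlyeq K_t(w)$ for all $i\in\mathbb{N}$ and $d(K_t^i(w),H_t^i(z))\to 0$ as $i\to\infty$; (ii) for each even $t$, $1\le t\le n$: $H_t$ is isotone, $K_t$ covers $H_t$, and every chain $C'\in\mathcal{C}(x_0,H_t,K_t,\preccurlyeq)$ has a lower bound $w'\in X$ satisfying $w'\preccurlyeq H_t(w')$ for which there exists $z'\in X$ with $K_t^i(z')\preccurlyeq K_t(w')\preccurlyeq H_t(w')$ for all $i\in\mathbb{N}$ and $d(H_t^i(w'),K_t^i(z'))\to 0$ as $i\to\infty$. Then there exists a chain $x_0\succcurlyeq x_1\succcurlyeq x_2\succcurlyeq\cdots\succcurlyeq x_n$ such that for every $t$, $1\le t\le n$, $x_t\in\mathrm{Coin}(H_t,K_t)\cap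 O_X(x_{t-1})$ and $x_t$ is a minimal element of $\mathrm{Coin}(H_t,K_t)\cap O_X(x_{t-1})$.
   Context: A $b$-metric space with coefficient $s\ge 1$ is a nonempty set $X$ with $d:X\times X\to[0,\infty)$ such that for all $x,y,z$: $d(x,y)=0$ iff $x=y$; $d(x,y)=d(y,x)$; $d(x,y)\le s[d(x,z)+d(z,y)]$. A preorder is a reflexive transitive relation $\preccurlyeq$; $x\succcurlyeq y$ means $y\preccurlyeq x$; $x\prec y$ means $x\preccurlyeq y$ and $x\neq y$. A preordered $s$-regular $b$-metric space $(X,d,\preccurlyeq)$ is a $b$-metric space with coefficient $s$ with a preorder such that $x\preccurlyeq y\preccurlyeq z$ implies $\max\{d(x,y),d(y,z)\}\le s^2d(x,z)$. For maps $F,G:X\to X$, $F\preccurlyeq G$ means $F(x)\preccurlyeq G(x)$ for all $x\in X$. A chain is a subset any two elements of which are comparable. A map $T$ is isotone if $x\preccurlyeq y$ implies $T(x)\preccurlyeq T(y)$; $T^i$ is the $i$-th iterate. $O_X(x_0)=\{x: x\preccurlyeq x_0\}$; $\mathrm{Coin}(T,S)=\{x: T(x)=S(x)\}$. A map $S$ covers a map $T$ if for every $x\in X$ with $T(x)\preccurlyeq S(x)$ there exists $y\preccurlyeq x$ with $S(y)=T(x)$. For maps $T,S$ (here the first argument is the map playing the role of $T$), $\mathcal{C}(T,S,\preccurlyeq)$ is the set of chains $C$ such that for all $x,y\in C$: $T(x)\preccurlyeq S(x)$; $x\prec y$ implies $S(x)\preccurlyeq T(y)$; and $S(C)\subset T(X)$;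 and $\mathcal{C}(x_0,T,S,\preccurlyeq)=\{C\in\mathcal{C}(T,S,\preccurlyeq): C\subset O_X(x_0),\ S(C)\subset T(O_X(x_0))\}$. A lower bound of $C$ is $w$ with $w\preccurlyeq x$ for all $x\in C$. A minimal element of $A$ is $w\in A$ with no $u\in A$ such that $u\prec w$. *)

(* Defs.v *)
From Stdlib Require Export Reals Arith.
Open Scope R_scope.

Section Defs.
Context {X : Type}.

Definition is_bmetric (d : X -> X -> R) (s : R) : Prop :=
  1 <= s /\
  (forall x y, 0 <= d x y) /\
  (forall x y, d x y = 0 <-> x = y) /\
  (forall x y, d x y = d y x) /\
  (forall x y z, d x y <= s * (d x z + d z y)).

Definition is_preorder (le : X -> X -> Prop) : Prop :=
  (forall x, le x x) /\ (forall x y z, le x y -> le y z -> le x z).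

Definition preordered_s_regular_bmetric (d : X -> X -> R) (s : R)
  (le : X -> X -> Prop) : Prop :=
  is_bmetric d s /\ is_preorder le /\
  (forall x y z, le x y -> le y z -> Rmax (d x y) (d y z) <= s ^ 2 * d x z).

Definition strict (le : X -> X -> Prop) (x y : X) : Prop := le x y /\ x <> y.

Definition map_le (le : X -> X -> Prop) (F G : X -> X) : Prop :=
  forall x, le (F x) (G x).

Definition is_chain (le : X -> X -> Prop) (C : X -> Prop) : Prop :=
  forall x y, C x -> C y -> le x y \/ le y x.

Definition isotone (le : X -> X -> Prop) (T : X -> X) : Prop :=
  forall x y, le x y -> le (T x) (T y).

Definition OX (le : X -> X -> Prop) (x0 : X) : X -> Prop := fun x => le x x0.

Definition Coin (T S : X -> X) : X -> Prop := fun x => T x = S x.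

Definition covers (le : X -> X -> Prop) (S T : X -> X) : Prop :=
  forall x, le (T x) (S x) -> exists y, le y x /\ S y = T x.

Definition chainsC (le : X -> X -> Prop) (T S : X -> X) (C : X -> Prop) : Prop :=
  is_chain le C /\
  (forall x, C x -> le (T x) (S x)) /\
  (forall x y, C x -> C y -> strict le x y -> le (S x) (T y)) /\
  (forall x, C x -> exists u, S x = T u).

Definition chainsC0 (le : X -> X -> Prop) (x0 : X) (T S : X -> X)
  (C : X -> Prop) : Prop :=
  chainsC le T S C /\
  (forall x, C x -> OX le x0 x) /\
  (forall x, C x -> exists u, OX le x0 u /\ S x = T u).

Definition lower_bound (le : X -> X -> Prop) (C : X -> Prop) (w : X) : Prop :=
  forall x, C x -> le w x.

Definition minimal_in (le : X -> X -> Prop) (A : X -> Prop) (w : X) : Prop :=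
  A w /\ ~ (exists u, A u /\ strict le u w).

End Defs.

(* Main.v *)
Require Import Defs.
From Stdlib Require Import Reals Arith Lia Lra.
From mathcomp Require all_boot classical_sets boolp.
Module ZZ.
Import all_boot classical_sets boolp.
Lemma zorn_min (X:Type) (le : X->X->Prop) (P : X -> Prop) :
  (forall x, le x x) -> (forall x y z, le x y -> le y z -> le x z) ->
  (forall x y, le x y -> le y x -> x = y) ->
  (exists p, P p) ->
  (forall C : X -> Prop, (forall x, C x -> P x) ->
     (forall x y, C x -> C y -> le x y \/ le y x) -> (exists x, C x) ->
     exists w, P w /\ forall x, C x -> le w x) ->
  exists m, P m /\ forall u, P u -> le u m -> u = m.
Proof.
move=> Hr Ht Ha [p Pp] Hc.
pose T := {x | P x}.
pose R (a b : T) := `[< le (proj1_sig b) (proj1_sig a) >].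
have [| | | |m Hm] := @Zorn T R; last first.
  case: m Hm => m Pm Hm; exists m; split => // u Pu lum.
  have := Hm (exist P u Pu); rewrite /R /=.
  move=> H; have := H (asboolT lum) => e.
  by case: e.
- move=> A Atot.
  case: (pselect (exists a, A a)) => [[a0 Aa0]|nA]; last first.
    by exists (exist P p Pp) => s As; exfalso; apply: nA; exists s.
  pose C := (fun x => exists h : P x, A (exist P x h)).
  have c1 : forall x, C x -> P x by move=> x [h _].
  have c2 : forall x y, C x -> C y -> le x y \/ le y x.
    move=> x y [hx Ax] [hy Ay].
    by case: (Atot _ _ Ax Ay) => /asboolP h; [right|left].
  have c3 : exists x, C x by case: a0 Aa0 => a h Aa; exists a, h.
  case: (Hc C c1 c2 c3) => w [Pw Hw].
  exists (exist P w Pw) => s As; apply/asboolP => /=.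
  apply: Hw; case: s As => s h As; by exists h.
- move=> [a Pa] [b Pb] /asboolP h1 /asboolP h2 /=.
  have e : a = b by apply: Ha.
  subst b; congr exist; exact: Prop_irrelevance.
- by move=> a b c /asboolP h1 /asboolP h2; apply/asboolP; apply: Ht h2 h1.
- by move=> a; apply/asboolP.
Qed.
End ZZ.
Open Scope R_scope.

Section Main.
Context {X : Type} (d : X -> X -> R) (s : R) (le : X -> X -> Prop).
Hypothesis Hsp : preordered_s_regular_bmetric d s le.

Lemma le_refl' x : le x x.
Proof. destruct Hsp as [_ [[h _] _]]. apply h. Qed.

Lemma le_trans' x y z : le x y -> le y z -> le x z.
Proof. destruct Hsp as [_ [[_ h] _]]. apply h. Qed.

Lemma le_antisym' x y : le x y -> le y x -> x = y.
Proof.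
  intros h1 h2. destruct Hsp as [[Hs1 [Hpos [Hd0 [Hsym Htri]]]] [_ Hreg]].
  pose proof (Hreg x y x h1 h2) as h.
  assert (d x x = 0) as e by (apply Hd0; reflexivity).
  rewrite e, Rmult_0_r in h.
  pose proof (Rmax_l (d x y) (d y x)). pose proof (Hpos x y).
  apply Hd0. lra.
Qed.

Lemma iter_mono (A : X -> X) w : isotone le A -> le w (A w) ->
  forall i, le (Nat.iter i A w) (Nat.iter (S i) A w).
Proof.
  intros HA Hw i. induction i as [|i IH].
  - simpl. exact Hw.
  - change (le (A (Nat.iter i A w)) (A (Nat.iter (S i) A w))). apply HA. exact IH.
Qed.

Lemma iter_ge (A : X -> X) w : isotone le A -> le w (A w) ->
  forall i, le (A w) (Nat.iter (S i) A w).
Proof.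
  intros HA Hw i. induction i as [|i IH].
  - simpl. apply le_refl'.
  - eapply le_trans'. exact IH. apply iter_mono; assumption.
Qed.

Lemma coin_conv (A B : X -> X) w z : isotone le A -> le w (A w) ->
  le (B w) (A w) ->
  (forall i, (1 <= i)%nat -> le (Nat.iter i B z) (B w)) ->
  Un_cv (fun i => d (Nat.iter i A w) (Nat.iter i B z)) 0 ->
  B w = A w.
Proof.
  intros HA Hw Hba Hz Hcv.
  destruct Hsp as [[Hs1 [Hpos [Hd0 [Hsym Htri]]]] [_ Hreg]].
  assert (key : forall j, d (B w) (A w) <= s ^ 2 * (s ^ 2 * d (Nat.iter (S j) A w) (Nat.iter (S j) B z))).
  { intro j.
    set (a := Nat.iter (S j) B z). set (e := Nat.iter (S j) A w).
    assert (hab : le a (B w)) by (apply Hz; lia).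
    assert (hce : le (A w) e) by (apply iter_ge; assumption).
    pose proof (Hreg a (B w) (A w) hab Hba) as h1.
    pose proof (Hreg a (A w) e (le_trans' _ _ _ hab Hba) hce) as h2.
    pose proof (Rmax_r (d a (B w)) (d (B w) (A w))).
    pose proof (Rmax_l (d a (A w)) (d (A w) e)).
    rewrite (Hsym e a).
    assert (0 <= s ^ 2) by (apply pow_le; lra).
    assert (d a (A w) <= s ^ 2 * d a e) by lra.
    apply Rle_trans with (s ^ 2 * d a (A w)). lra.
    apply Rmult_le_compat_l; assumption. }
  apply Hd0.
  pose proof (Hpos (B w) (A w)) as hp.
  destruct (Rle_lt_or_eq_dec 0 _ hp) as [hlt|heq]; [|lra].
  exfalso.
  assert (hs4 : 0 < s ^ 2 * s ^ 2) by (apply Rmult_lt_0_compat; apply pow_lt; lra).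
  set (eps := d (B w) (A w) / (2 * (s ^ 2 * s ^ 2))).
  assert (heps : eps > 0) by (unfold eps; apply Rdiv_lt_0_compat; lra).
  destruct (Hcv eps heps) as [N HN].
  specialize (HN (S N) ltac:(lia)). unfold R_dist in HN.
  rewrite Rminus_0_r in HN.
  pose proof (Hpos (Nat.iter (S N) A w) (Nat.iter (S N) B z)).
  rewrite Rabs_right in HN by lra.
  specialize (key N).
  assert (hfin : d (B w) (A w) < s ^ 2 * s ^ 2 * eps).
  { rewrite <- Rmult_assoc in key. eapply Rle_lt_trans. exact key.
    apply Rmult_lt_compat_l; assumption. }
  unfold eps in hfin.
  replace (s ^ 2 * s ^ 2 * (d (B w) (A w) / (2 * (s ^ 2 * s ^ 2)))) with (d (B w) (A w) / 2) in hfin by (field; lra).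
  lra.
Qed.

Lemma step_lemma (A B : X -> X) (x0 p : X) :
  le p x0 -> le (A p) (B p) -> isotone le A -> covers le B A ->
  (forall C : X -> Prop, chainsC0 le x0 A B C ->
     exists w : X, lower_bound le C w /\ le w (A w) /\
       exists z : X,
         (forall i : nat, (1 <= i)%nat ->
            le (Nat.iter i B z) (B w) /\ le (B w) (A w)) /\
         Un_cv (fun i => d (Nat.iter i A w) (Nat.iter i B z)) 0) ->
  exists q, minimal_in le (fun y => Coin B A y /\ OX le p y) q.
Proof.
  intros Hp Hab HA Hcov Hch.
  assert (LB : forall C, chainsC0 le x0 A B C -> exists w, lower_bound le C w /\ B w = A w).
  { intros C HC. destruct (Hch C HC) as [w [Hlb [Hw [z [Hz Hcv]]]]].
    exists w. split; [exact Hlb|].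
    apply (coin_conv A B w z HA Hw).
    - apply (Hz 1%nat). lia.
    - intros i hi. apply (Hz i hi).
    - exact Hcv. }
  destruct (ZZ.zorn_min X le (fun y => Coin B A y /\ OX le p y)) as [m [Pm Hm]].
  - apply le_refl'.
  - apply le_trans'.
  - apply le_antisym'.
  - destruct (Hcov p Hab) as [y [Hyp Hy]].
    destruct (LB (fun x => x = y)) as [w [Hlw Hw]].
    + split; [split; [|split; [|split]]|split].
      * intros a b ha hb. subst. left. apply le_refl'.
      * intros a ha. subst. rewrite Hy. apply HA. exact Hyp.
      * intros a b ha hb [_ hne]. subst. congruence.
      * intros a ha. subst. exists p. exact Hy.
      * intros a ha. subst. unfold OX. eapply le_trans'; eassumption.
      * intros a ha. subst. exists p. split; [exact Hp|exact Hy].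
    + exists w. split; [exact Hw|]. unfold OX. eapply le_trans'; [apply Hlw; reflexivity|exact Hyp].
  - intros C HCP Hchain [c Hc].
    destruct (LB C) as [w [Hlw Hw]].
    + split; [split; [|split; [|split]]|split].
      * exact Hchain.
      * intros a ha. destruct (HCP a ha) as [e _]. unfold Coin in e. rewrite e. apply le_refl'.
      * intros a b ha hb [hab _]. destruct (HCP a ha) as [e _]. unfold Coin in e. rewrite e. apply HA. exact hab.
      * intros a ha. exists a. destruct (HCP a ha) as [e _]. exact e.
      * intros a ha. destruct (HCP a ha) as [_ o]. unfold OX in *. eapply le_trans'; eassumption.
      * intros a ha. exists a. destruct (HCP a ha) as [e o]. split; [|exact e].
        unfold OX in *. eapply le_trans'; eassumption.
    + exists w. split; [split; [exact Hw|]|exact Hlw].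
      destruct (HCP c Hc) as [_ o]. unfold OX in *. eapply le_trans'; [apply Hlw; exact Hc|exact o].
  - exists m. split; [exact Pm|].
    intros [u [Pu [hu hne]]]. apply hne. apply Hm; assumption.
Qed.
End Main.


Theorem theorem2p3 (X : Type) (d : X -> X -> R) (s : R) (le : X -> X -> Prop)
  (T S Tt St : X -> X) (n : nat) (H K : nat -> X -> X) (x0 : X) :
  preordered_s_regular_bmetric d s le ->
  H 0%nat = T -> K 0%nat = S -> H n = Tt -> K n = St ->
  (* T = H_0 ≼ H_1 ≽ H_2 ≼ ... ;  S = K_0 ≽ K_1 ≼ K_2 ≽ ... *)
  (forall t : nat, (t < n)%nat ->
     if Nat.even t then map_le le (H t) (H (t + 1)%nat) /\ map_le le (K (t + 1)%nat) (K t)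
     else map_le le (H (t + 1)%nat) (H t) /\ map_le le (K t) (K (t + 1)%nat)) ->
  Coin T S x0 ->
  (* (i) odd t *)
  (forall t : nat, (1 <= t <= n)%nat -> Nat.odd t = true ->
     isotone le (K t) /\ covers le (H t) (K t) /\
     (forall C : X -> Prop, chainsC0 le x0 (K t) (H t) C ->
        exists w : X, lower_bound le C w /\ le w (K t w) /\
          exists z : X,
            (forall i : nat, (1 <= i)%nat ->
               le (Nat.iter i (H t) z) (H t w) /\ le (H t w) (K t w)) /\
            Un_cv (fun i => d (Nat.iter i (K t) w) (Nat.iter i (H t) z)) 0)) ->
  (* (ii) even t *)
  (forall t : nat, (1 <= t <= n)%nat -> Nat.even t = true ->
     isotone le (H t) /\ covers le (K t) (H t) /\
     (forall C : X -> Prop, chainsC0 le x0 (H t) (K t) C ->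
        exists w : X, lower_bound le C w /\ le w (H t w) /\
          exists z : X,
            (forall i : nat, (1 <= i)%nat ->
               le (Nat.iter i (K t) z) (K t w) /\ le (K t w) (H t w)) /\
            Un_cv (fun i => d (Nat.iter i (H t) w) (Nat.iter i (K t) z)) 0)) ->
  exists x : nat -> X,
    x 0%nat = x0 /\
    forall t : nat, (1 <= t <= n)%nat ->
      le (x t) (x (t - 1)%nat) /\
      Coin (H t) (K t) (x t) /\ OX le (x (t - 1)%nat) (x t) /\
      minimal_in le (fun y => Coin (H t) (K t) y /\ OX le (x (t - 1)%nat) y) (x t).
Proof.
  intros Hsp HT HS HTt HSt Hmono Hx0 Hodd Heven.
  assert (G : forall m, (m <= n)%nat -> exists x : nat -> X,
    x 0%nat = x0 /\
    (forall t : nat, (1 <= t <= m)%nat ->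
      le (x t) (x (t - 1)%nat) /\
      Coin (H t) (K t) (x t) /\ OX le (x (t - 1)%nat) (x t) /\
      minimal_in le (fun y => Coin (H t) (K t) y /\ OX le (x (t - 1)%nat) y) (x t)) /\
    Coin (H m) (K m) (x m) /\ le (x m) x0).
  { induction m as [|m IH]; intros hm.
    - exists (fun _ => x0). split; [reflexivity|split; [intros t ht; lia|split]].
      + unfold Coin. rewrite HT, HS. exact Hx0.
      + apply (le_refl' d s le Hsp).
    - destruct (IH ltac:(lia)) as [x [hx0 [hxt [hcoin hle]]]].
      assert (hq : exists q, le q (x m) /\
                 minimal_in le (fun y => Coin (H (Datatypes.S m)) (K (Datatypes.S m)) y /\ OX le (x m) y) q).
      { pose proof (Hmono m ltac:(lia)) as hmm. rewrite Nat.add_1_r in hmm.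
        unfold Coin in hcoin.
        destruct (Nat.even m) eqn:E.
        - destruct hmm as [h1 h2].
          assert (Eo : Nat.odd (Datatypes.S m) = true) by (rewrite Nat.odd_succ; exact E).
          destruct (Hodd (Datatypes.S m) ltac:(lia) Eo) as [HA [Hcov Hch]].
          destruct (step_lemma d s le Hsp (K (Datatypes.S m)) (H (Datatypes.S m)) x0 (x m) hle) as [q hq]; try assumption.
          + eapply (le_trans' d s le Hsp). apply h2. rewrite <- hcoin. apply h1.
          + exists q. split; [apply (proj2 (proj1 hq))|exact hq].
        - destruct hmm as [h1 h2].
          assert (Eo : Nat.even (Datatypes.S m) = true) by (rewrite Nat.even_succ, <- Nat.negb_even, E; reflexivity).
          destruct (Heven (Datatypes.S m) ltac:(lia) Eo) as [HA [Hcov Hch]].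
          destruct (step_lemma d s le Hsp (H (Datatypes.S m)) (K (Datatypes.S m)) x0 (x m) hle) as [q hq]; try assumption.
          + eapply (le_trans' d s le Hsp). apply h1. rewrite hcoin. apply h2.
          + exists q. split; [apply (proj2 (proj1 hq))|].
            destruct hq as [[c o] nm]. split; [split; [symmetry; exact c|exact o]|].
            intros [u [[cu ou] su]]. apply nm. exists u. split; [split; [symmetry; exact cu|exact ou]|exact su]. }
      destruct hq as [q [hqle hqmin]].
      exists (fun t => if Nat.eqb t (Datatypes.S m) then q else x t).
      split; [simpl; exact hx0|split; [|split]].
      + intros t ht. destruct (Nat.eq_dec t (Datatypes.S m)) as [e|ne].
        * subst t. rewrite Nat.eqb_refl. replace (Datatypes.S m - 1)%nat with m by lia.
          assert (em : Nat.eqb m (Datatypes.S m) = false) by (apply Nat.eqb_neq; lia).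
          rewrite em. destruct hqmin as [[c o] nm].
          split; [exact hqle|split; [exact c|split; [exact o|]]]. split; [split; assumption|exact nm].
        * assert (e1 : Nat.eqb t (Datatypes.S m) = false) by (apply Nat.eqb_neq; lia).
          assert (e2 : Nat.eqb (t - 1) (Datatypes.S m) = false) by (apply Nat.eqb_neq; lia).
          rewrite e1, e2. apply hxt. lia.
      + rewrite Nat.eqb_refl. exact (proj1 (proj1 hqmin)).
      + rewrite Nat.eqb_refl. eapply (le_trans' d s le Hsp). exact hqle. exact hle. }
  destruct (G n (Nat.le_refl n)) as [x [hx0 [hxt _]]].
  exists x. split; assumption.
Qed.
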